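(* Let $G=(V,E)$ be a non-bipartite graph with $n=|V|\ge 5$ vertices, and let $K,K'$ be $k$-cliques of $G$ where $n-k-1=\binom{k}{2}$. Let $H$ be the bipartite graph with vertex set $V\cup E$ (bipartition $\{V,E\}$) and edge set $\{\{v,e\} : v\in V,\ e\in E,\ v\notin e\}$. Let $p=n-k-1$. Let $S$ be obtained from $(V\setminus K)\cup E(K)$ by removing an arbitrary vertex of $V\setminus K$, and let $S'$ be obtained from $(V\setminus K')\cup E(K')$ by removing an arbitrary vertex of $V\setminus K'$ (so $S,S'$ are $(p,p)$-bicliques of $H$). If there is a TJ-sequence of $(p,p)$-bicliques from $S$ to $S'$ in $H$, then there is a TJ-sequence of $k$-cliques from $K$ to $K'$ in $G$.
   Context: For $U\subseteq V$, $E(U)$ denotes the set of edges of $G$ with both endpoints in $U$. A $k$-clique is a set of $k$ pairwise adjacent vertices. A TJ-sequence of $k$-cliques is a sequence $K_0,\dots,K_\ell$ of $k$-cliques with $|K_i\setminus K_{i+1}|=|K_{i+1}\setminus K_i|=1$ for all $i$. A vertex set $S$ is a $(p,q)$-biclique of $H$ if $H[S]$ is isomorphic to $K_{p,q}$; a TJ-sequence of $(p,p)$-bicliques is a sequence $S_0,\dots,S_\ell$ of $(p,p)$-bicliques with $|S_i\setminus S_{i+1}|=|S_{i+1}\setminus S_i|=1$ for all $i$. *)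

(* Defs.v *)
From mathcomp Require Import all_boot.
Set Implicit Arguments. Unset Strict Implicit. Unset Printing Implicit Defensive.

Section Defs.
Variable V : finType.
Variable g : rel V.

Definition is_edge (e : {set V}) : bool :=
  [exists u, exists v, g u v && (e == [set u; v])].

Definition edges_in (U : {set V}) : {set {set V}} :=
  [set e | is_edge e & e \subset U].

Definition is_clique (k : nat) (K : {set V}) : Prop :=
  #|K| = k /\ (forall u v, u \in K -> v \in K -> u != v -> g u v).

Definition bipartite : Prop :=
  exists c : V -> bool, forall u v, g u v -> c u != c v.

(* the bipartite graph H on V ∪ E : vertices are inl v (v in V) and
   inr e (e an edge of G); v ~ e iff v is not in e *)
Definition HT := (V + {set V})%type.

Definition Hvert (x : HT) : bool :=
  match x with inl _ => true | inr e => is_edge e end.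

Definition Hadj (x y : HT) : bool :=
  match x, y with
  | inl v, inr e => is_edge e && (v \notin e)
  | inr e, inl v => is_edge e && (v \notin e)
  | _, _ => false
  end.
End Defs.

Section Generic.
Variable T : finType.
Variable adj : rel T.

Definition biclique (vert : pred T) (p q : nat) (S : {set T}) : Prop :=
  {subset S <= vert} /\
  exists A B : {set T},
    S = A :|: B /\ [disjoint A & B] /\ #|A| = p /\ #|B| = q /\
    (forall a b, a \in A -> b \in B -> adj a b /\ adj b a) /\
    (forall a a', a \in A -> a' \in A -> ~~ adj a a') /\
    (forall b b', b \in B -> b' \in B -> ~~ adj b b').

Definition tj_step (X Y : {set T}) : bool :=
  (#|X :\: Y| == 1) && (#|Y :\: X| == 1).

Definition TJ_seq (P : {set T} -> Prop) (X Y : {set T}) : Prop :=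
  exists s : seq {set T},
    [/\ path tj_step X s, last X s = Y & forall Z, Z \in X :: s -> P Z].
End Generic.

(* Main.v *)
Require Import Defs.
From mathcomp Require Import all_boot.
From mathcomp Require Import zify.

Set Implicit Arguments. Unset Strict Implicit. Unset Printing Implicit Defensive.

Section Aux.
Variable V : finType.
Variable g : rel V.
Hypothesis gsym : symmetric g.
Hypothesis girr : irreflexive g.

Definition VP (Z : {set HT V}) : {set V} := [set v | inl v \in Z].
Definition EP (Z : {set HT V}) : {set {set V}} := [set e | inr e \in Z].

Definition good p (Z : {set HT V}) : Prop :=
  [/\ #|VP Z| = p, #|EP Z| = p,
      (forall e, inr e \in Z -> is_edge g e) &
      (forall v e, inl v \in Z -> inr e \in Z -> v \notin e)].

Lemma card_pre_inl (A : {set HT V}) :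
  (forall a, a \in A -> exists v, a = inl v) -> #|[set v | inl v \in A]| = #|A|.
Proof.
move=> H.
have -> : A = inl @: [set v | inl v \in A].
  apply/eqP; rewrite eqEsubset; apply/andP; split; apply/subsetP.
    move=> a aA; case: (H a aA) => v E; subst a; apply/imsetP; exists v => //; by rewrite inE.
  by move=> a /imsetP [v]; rewrite inE => vA ->.
rewrite card_imset; last by move=> a b [].
apply: eq_card => v; rewrite !inE mem_imset ?inE //; by move=> a b [].
Qed.

Lemma card_pre_inr (A : {set HT V}) :
  (forall a, a \in A -> exists v, a = inr v) -> #|[set v | inr v \in A]| = #|A|.
Proof.
move=> H.
have -> : A = inr @: [set v | inr v \in A].
  apply/eqP; rewrite eqEsubset; apply/andP; split; apply/subsetP.
    move=> a aA; case: (H a aA) => v E; subst a; apply/imsetP; exists v => //; by rewrite inE.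
  by move=> a /imsetP [v]; rewrite inE => vA ->.
rewrite card_imset; last by move=> a b [].
apply: eq_card => v; rewrite !inE mem_imset ?inE //; by move=> a b [].
Qed.

Lemma good_parts p (A B : {set HT V}) :
  {subset A :|: B <= Hvert g} ->
  (forall a, a \in A -> exists v, a = inl v) ->
  (forall b, b \in B -> exists e, b = inr e) ->
  #|A| = p -> #|B| = p ->
  (forall a b, a \in A -> b \in B -> Hadj g a b) ->
  good p (A :|: B).
Proof.
move=> sub hA hB cA cB cr.
have nA : forall e, inr e \notin A.
  by move=> e; apply/negP => /hA [v].
have nB : forall v, inl v \notin B.
  by move=> v; apply/negP => /hB [e].
split.
- rewrite -cA -card_pre_inl //; apply: eq_card => v; rewrite !inE.
  by rewrite (negbTE (nB v)) orbF.
- rewrite -cB -card_pre_inr //; apply: eq_card => v; rewrite !inE.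
  by rewrite (negbTE (nA v)).
- by move=> e /sub.
- move=> v e; rewrite !inE (negbTE (nB v)) (negbTE (nA e)) orbF /= => va eb.
  by have /andP[] := cr _ _ va eb.
Qed.

Lemma sides (A B : {set HT V}) a0 b0 :
  (forall a b, a \in A -> b \in B -> Hadj g a b /\ Hadj g b a) ->
  a0 \in A -> b0 \in B -> (exists v, a0 = inl v) -> (exists e, b0 = inr e) ->
  (forall a, a \in A -> exists v, a = inl v) /\
  (forall b, b \in B -> exists e, b = inr e).
Proof.
move=> cr a0A b0B [v0 E0] [e0 F0]; subst.
split.
  case=> [v|e] aA; first by exists v.
  by have [] := cr _ _ aA b0B.
case=> [v|e] bB; last by exists e.
by have [] := cr _ _ a0A bB.
Qed.

Lemma biclique_good p Z : 0 < p -> biclique (Hadj g) (Hvert g) p p Z -> good p Z.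
Proof.
move=> p0 [sub [A [B [EZ [dis [cA [cB [cr _]]]]]]]].
have: A != set0 by rewrite -card_gt0 cA.
case/set0Pn => a0 a0A.
have: B != set0 by rewrite -card_gt0 cB.
case/set0Pn => b0 b0B.
subst Z.
have := cr _ _ a0A b0B; case: a0 a0A => [v0|e0] a0A; case: b0 b0B => [v1|e1] b0B /= [h1 h2].
- by [].
- have [hA hB] := sides cr a0A b0B (ex_intro _ v0 erefl) (ex_intro _ e1 erefl).
  apply: good_parts => // a b aA bB; by have [] := cr a b aA bB.
- have cr' : forall a b, a \in B -> b \in A -> Hadj g a b /\ Hadj g b a.
    by move=> a b aB bA; have [] := cr b a bA aB.
  have [hB hA] := sides cr' b0B a0A (ex_intro _ v1 erefl) (ex_intro _ e0 erefl).
  rewrite setUC; apply: good_parts => //.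
    by move=> y; rewrite setUC; apply: sub.
  by move=> a b aB bA; have [] := cr b a bA aB.
- by [].
Qed.

Lemma tj_cat (P : {set V} -> Prop) X Y W :
  TJ_seq P X Y -> TJ_seq P Y W -> TJ_seq P X W.
Proof.
case=> s [p1 l1 a1] [t [p2 l2 a2]].
exists (s ++ t); split.
- by rewrite cat_path p1 l1 p2.
- by rewrite last_cat l1.
- move=> Z; rewrite -cat_cons mem_cat => /orP[]; first exact: a1.
  move=> Zt; apply: a2; by rewrite inE Zt orbT.
Qed.

Lemma near k (W C D : {set V}) : #|W| = k.+1 -> C \subset W -> D \subset W ->
  is_clique g k C -> is_clique g k D -> TJ_seq (is_clique g k) C D.
Proof.
move=> cW sC sD hC hD.
have [->|neq] := eqVneq C D.
  exists [::]; split => //= Z; rewrite inE => /eqP ->; done.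
exists [:: D]; split => //=.
- rewrite andbT /tj_step.
  have hU : #|C :|: D| <= k.+1 by rewrite -cW; apply: subset_leq_card; rewrite subUset sC.
  have hUI := cardsUI C D.
  have hI : #|C :&: D| < k.
    case: hC => cC _; case: hD => cD _.
    rewrite ltn_neqAle; apply/andP; split; last by rewrite -cC; apply: subset_leq_card; apply: subsetIl.
    apply/negP => /eqP hk.
    have: C :&: D == C by rewrite eqEcard subsetIl hk cC leqnn.
    have: C :&: D == D by rewrite eqEcard subsetIr hk cD leqnn.
    by move=> /eqP h1 /eqP h2; move: neq; rewrite -h1 -{1}h2 eqxx.
  case: hC => cC _; case: hD => cD _.
  have d1 := cardsD C D; have d2 := cardsD D C; rewrite setIC in d2.
  move: hUI hI hU d1 d2; rewrite cC cD => hUI hI hU d1 d2.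
  apply/andP; split; apply/eqP; [rewrite d1 | rewrite d2]; lia.
- move=> Z; rewrite !inE => /orP[] /eqP ->; done.
Qed.

Lemma clique_iso k p (Z : {set HT V}) w :
  p = 'C(k, 2) -> good p Z -> #|~: VP Z| = k.+1 -> w \notin VP Z ->
  (forall e, e \in EP Z -> w \notin e) ->
  is_clique g k (~: VP Z :\ w).
Proof.
move=> hp [cV cE hed hdis] cW wV hw.
set U := ~: VP Z :\ w.
have cU : #|U| = k.
  move: (cardsD1 w (~: VP Z)); rewrite cW inE wV /= add1n => [[]] //.
split => //.
set P2 := [set A : {set V} | A \subset U & #|A| == 2].
have sub : EP Z \subset P2.
  apply/subsetP => e; rewrite inE => eZ; rewrite inE.
  have /existsP[a /existsP[b /andP[gab /eqP Ee]]] := hed _ eZ.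
  apply/andP; split.
    apply/subsetP => y ye; rewrite !inE.
    have -> : y != w.
      apply/negP => /eqP E; subst y; move: (hw e); rewrite inE eZ ye; by move/(_ isT).
    rewrite /=; apply/negP => yZ.
    by move: (hdis _ _ yZ eZ); rewrite ye.
  rewrite Ee cards2; suff : a != b by case: (a != b).
  by apply/eqP => E; rewrite E girr in gab.
have EQ : EP Z = P2.
  apply/eqP; rewrite eqEcard sub /= cE hp /P2 cards_draws cU leqnn //.
move=> u v uU vU uv.
have : [set u; v] \in EP Z.
  rewrite EQ inE cards2 uv andbT; apply/subsetP => y; rewrite !inE.
  by case/orP => /eqP ->; [move: uU | move: vU]; rewrite !inE.
rewrite inE => /hed /existsP[a /existsP[b /andP[gab /eqP Ee]]].
have ua : u \in [set a; b] by rewrite -Ee !inE eqxx.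
have va : v \in [set a; b] by rewrite -Ee !inE eqxx orbT.
move: ua va uv; rewrite !inE => /orP[]/eqP-> /orP[]/eqP->; rewrite ?eqxx //.
by rewrite gsym.
Qed.

Lemma main_ind k p (K' : {set V}) (x' : V) :
  p = 'C(k, 2) -> #|V| = p + k + 1 -> is_clique g k K' ->
  forall s (Z : {set HT V}), path (@tj_step _) Z s -> (forall Y, Y \in Z :: s -> good p Y) ->
  VP (last Z s) = ~: K' :\ x' ->
  forall C, is_clique g k C -> (forall v, v \in C -> v \notin VP Z) ->
  TJ_seq (is_clique g k) C K'.
Proof.
move=> hp hn hK'.
have cW : forall Z, good p Z -> #|~: VP Z| = k.+1.
  move=> Z [cV _ _ _]; move: (cardsC (VP Z)); rewrite cV hn; lia.
elim=> [|Z1 s IH] Z /=.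
  move=> _ hg hl C hC hCd.
  apply: (@near k (~: VP Z)) => //.
  - by apply: cW; apply: hg; rewrite inE eqxx.
  - by apply/subsetP => v vC; rewrite inE hCd.
  - apply/subsetP => v vK; rewrite inE hl !inE vK andbF //.
move=> /andP[st hpath] hg hl C hC hCd.
have gZ : good p Z by apply: hg; rewrite inE eqxx.
have gZ1 : good p Z1 by apply: hg; rewrite !inE eqxx orbT.
have hg1 : forall Y, Y \in Z1 :: s -> good p Y.
  by move=> Y YI; apply: hg; rewrite inE YI orbT.
have [sVP|nsVP] := boolP (VP Z1 \subset VP Z).
  apply: (IH Z1) => // v vC; apply/negP => vZ1.
  by move: (hCd v vC); rewrite (subsetP sVP v vZ1).
have [w /andP[wZ1 wZ]] : exists w, (w \in VP Z1) && (w \notin VP Z).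
  move: nsVP => /subsetPn[w a b]; exists w; by rewrite a b.
move: st; rewrite /tj_step => /andP[_ /cards1P[y Ey]].
have ew : y = inl w.
  have : inl w \in Z1 :\: Z by rewrite inE; rewrite !inE in wZ1 wZ; rewrite wZ1 wZ.
  by rewrite Ey inE => /eqP ->.
subst y.
have sE : EP Z1 \subset EP Z.
  apply/subsetP => e; rewrite !inE => eZ1; apply/negPn/negP => eZ.
  have : inr e \in Z1 :\: Z by rewrite inE eZ eZ1.
  by rewrite Ey inE.
have EE : EP Z1 = EP Z.
  apply/eqP; rewrite eqEcard sE /=; case: gZ => _ -> _ _; case: gZ1 => _ -> _ _ //.
have hw : forall e, e \in EP Z -> w \notin e.
  move=> e; rewrite -EE inE => eZ1; case: gZ1 => _ _ _ h; apply: h => //.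
  by rewrite inE in wZ1.
have hC' := clique_iso hp gZ (cW _ gZ) wZ hw.
apply: tj_cat (_ : TJ_seq _ C (~: VP Z :\ w)) _.
  apply: (@near k (~: VP Z)) => //.
  - exact: cW.
  - by apply/subsetP => v vC; rewrite inE hCd.
  - by apply: subsetDl.
apply: (IH Z1) => // v; rewrite !inE => /andP[vw vZ]; apply/negP => vZ1.
have : inl v \in Z1 :\: Z by rewrite inE vZ1 vZ.
by rewrite Ey inE => /eqP [E]; rewrite E eqxx in vw.
Qed.

Lemma VP_S (X : {set V}) (Y : {set {set V}}) :
  VP ((inl @: X) :|: (inr @: Y)) = X.
Proof.
apply/setP => v; rewrite !inE mem_imset; last by move=> a b [].
case: (v \in X) => //=; apply/negP => /imsetP[e _] //.
Qed.

End Aux.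

Theorem lemma4 (V : finType) (g : rel V)
  (gsym : symmetric g) (girr : irreflexive g)
  (nonbip : ~ bipartite g) (hn : 5 <= #|V|)
  (k : nat) (K K' : {set V})
  (hK : is_clique g k K) (hK' : is_clique g k K')
  (hk : #|V| = 'C(k, 2) + k + 1)
  (x x' : V) (hx : x \in ~: K) (hx' : x' \in ~: K') :
  let p := #|V| - k - 1 in
  let S : {set HT V} :=
    (inl @: (~: K :\ x)) :|: (inr @: edges_in g K) in
  let S' : {set HT V} :=
    (inl @: (~: K' :\ x')) :|: (inr @: edges_in g K') in
  TJ_seq (biclique (Hadj g) (Hvert g) p p) S S' ->
  TJ_seq (is_clique g k) K K'.
Proof.
move=> p S S' [s [hpath hlast hall]].
have hp : p = 'C(k, 2) by rewrite /p hk; lia.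
have p0 : 0 < p.
  rewrite hp bin_gt0; case: (leqP 2 k) => // hk2.
  by rewrite bin_small // in hk; move: hn; rewrite hk; lia.
apply: (@main_ind V g gsym girr k p K' x' hp _ hK' s S hpath).
- by rewrite hp.
- by move=> Y /hall; apply: biclique_good.
- by rewrite hlast /S' VP_S.
- exact: hK.
- by move=> v vK; rewrite /S VP_S !inE vK andbF.
Qed.
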